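(* Let $\mathcal X_1,\dots,\mathcal X_n$ be discrete (finite or countable) alphabets. For each $i=1,\dots,n$ let $\{p^{(i)}_{\lambda_i}(\cdot\,|\,x_1,\dots,x_{i-1})\}_{\lambda_i\in\Lambda_i}$ be a nonempty family of conditional probability distributions on $\mathcal X_i$ given $(x_1,\dots,x_{i-1})\in\mathcal X_1\times\cdots\times\mathcal X_{i-1}$ (for $i=1$ these are just probability distributions on $\mathcal X_1$). Then $$\hat H(X_1,\dots,X_n)\le\sum_{i=1}^n \hat H(X_i|X_{i-1},\dots,X_1).$$
   Context: Convention: $0\log\frac10=0$; values in $[0,\infty]$. For $H(q)=\sum_u q(u)\log\frac1{q(u)}$ the Shannon entropy of a distribution $q$. For $(\lambda_1,\dots,\lambda_k)\in\Lambda_1\times\cdots\times\Lambda_k$ let $p_{\lambda_1,\dots,\lambda_k}(x_1,\dots,x_k)=\prod_{i=1}^k p^{(i)}_{\lambda_i}(x_i|x_1,\dots,x_{i-1})$. Define the nonlinear joint entropy $\hat H(X_1,\dots,X_n)=\sup_{\lambda_1,\dots,\lambda_n}H(p_{\lambda_1,\dots,\lambda_n})$ and the nonlinear conditional entropy $\hat H(X_i|X_{i-1},\dots,X_1)=\sup_{\lambda_1,\dots,\lambda_{i-1}}\sum_{x_1,\dots,x_{i-1}}p_{\lambda_1,\dots,\lambda_{i-1}}(x_1,\dots,x_{i-1})\,\sup_{\lambda_i\in\Lambda_i}H\big(p^{(i)}_{\lambda_i}(\cdot|x_1,\dots,x_{i-1})\big)$, with $\hat H(X_1|\,\cdot\,)=\sup_{\lambda_1}H(p^{(1)}_{\lambda_1})$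 for $i=1$. (These extend the two-variable definitions $\hat H(X,Y)=\sup_\theta\sup_\lambda H(p_\theta p_\lambda)$ and $\hat H(Y|X)=\sup_\theta\sum_x p_\theta(x)\sup_\lambda H(p_\lambda(\cdot|x))$.) *)

(* Defs.v *)
From HB Require Import structures.
From mathcomp Require Import all_boot all_order all_algebra.
From mathcomp Require Import all_classical all_reals all_analysis.
Set Implicit Arguments. Unset Strict Implicit. Unset Printing Implicit Defensive.
Import Order.TTheory GRing.Theory Num.Theory.
Local Open Scope classical_set_scope.
Local Open Scope ring_scope.

(* Histories (x_0, ..., x_{m-1}) with x_j in the alphabet X j. *)
Definition hist (X : nat -> countType) (m : nat) := {dffun forall j : 'I_m, X j}.

Definition restr (X : nat -> countType) (m : nat) (x : hist X m) (i : 'I_m)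
  : hist X i :=
  [ffun k : 'I_i => x (widen_ord (ltnW (ltn_ord i)) k)].

Definition entropy (R : realType) (T : choiceType) (q : T -> R) : \bar R :=
  esum [set: T] (fun u => (if q u == 0 then 0 else q u * ln (q u)^-1)%:E).

Definition joint (R : realType) (X : nat -> countType) (L : nat -> Type)
  (p : forall i : nat, L i -> hist X i -> X i -> R)
  (m : nat) (lam : forall j : 'I_m, L j) (x : hist X m) : R :=
  \prod_(j < m) p j (lam j) (restr x j) (x j).

Definition Hhat_joint (R : realType) (X : nat -> countType) (L : nat -> Type)
  (p : forall i : nat, L i -> hist X i -> X i -> R) (n : nat) : \bar R :=
  ereal_sup [set entropy (joint p lam) | lam in [set: forall j : 'I_n, L j]].

Definition Hhat_cond (R : realType) (X : nat -> countType) (L : nat -> Type)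
  (p : forall i : nat, L i -> hist X i -> X i -> R) (i : nat) : \bar R :=
  ereal_sup [set esum [set: hist X i]
                 (fun x => (joint p lam x)%:E *
                    ereal_sup [set entropy (p i l x) | l in [set: L i]])%E
            | lam in [set: forall j : 'I_i, L j]].

Definition is_distr (R : realType) (T : choiceType) (q : T -> R) : Prop :=
  (forall u, 0 <= q u) /\ esum [set: T] (fun u => (q u)%:E) = 1%E.

(* Main.v *)
Require Import Defs.
From HB Require Import structures.
From mathcomp Require Import all_boot all_order all_algebra.
From mathcomp Require Import all_classical all_reals all_analysis.
From mathcomp Require Import ring.
Import Order.TTheory GRing.Theory Num.Theory.
Local Open Scope classical_set_scope.
Local Open Scope ring_scope.


Section S.
Variable R : realType.

Definition ent (v : R) : R := if v == 0 then 0 else v * ln v^-1.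

Lemma ent_ge0 v : 0 <= v <= 1 -> 0 <= ent v.
Proof.
case/andP=> v0 v1; rewrite /ent; case: eqP => // /eqP vn0.
have vp : 0 < v by rewrite lt0r vn0.
by rewrite mulr_ge0 // ln_ge0 // invf_ge1.
Qed.

Lemma entM a b : 0 <= a -> 0 <= b -> ent (a * b) = b * ent a + a * ent b.
Proof.
move=> a0 b0; rewrite /ent.
have [->|an] := eqVneq a 0; first by rewrite !mul0r eqxx mulr0 addr0.
have [->|bn] := eqVneq b 0; first by rewrite !mulr0 eqxx mul0r addr0.
rewrite mulf_eq0 (negPf an) (negPf bn) /=.
have ap : 0 < a by rewrite lt0r an.
have bp : 0 < b by rewrite lt0r bn.
rewrite invfM lnM ?posrE ?invr_gt0 //; ring.
Qed.

Local Open Scope ereal_scope.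

Lemma esumZ (T : choiceType) (S : set T) (r : R) (a : T -> \bar R) :
  (0 <= r)%R -> (forall i, 0 <= a i) ->
  \esum_(i in S) (r%:E * a i) = r%:E * \esum_(i in S) a i.
Proof.
move=> r0 a0; rewrite /esum -ereal_supZl //; last first.
  by apply/set0P; exists 0; exists set0; [exact: fsets_set0| rewrite fsbig_set0].
congr ereal_sup; apply/seteqP; split=> x /=.
  by case=> A HA <-; exists (\sum_(i \in A) a i); [exists A|rewrite ge0_mule_fsumr].
by case=> y [A HA <-] <-; exists A => //; rewrite ge0_mule_fsumr.
Qed.

Lemma esum_subset (T : choiceType) (A B : set T) (a : T -> \bar R) :
  A `<=` B -> (forall i, 0 <= a i) -> \esum_(i in A) a i <= \esum_(i in B) a i.
Proof.
move=> AB a0; rewrite esum_mkcond [leRHS]esum_mkcond; apply: le_esum => i _.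
case: ifPn => iA; last by case: ifPn.
by rewrite ifT // inE; apply: AB; rewrite -inE.
Qed.

Local Close Scope ereal_scope.
Variables (X : nat -> countType) (L : nat -> Type)
  (p : forall i : nat, L i -> hist X i -> X i -> R) (n : nat)
  (hp : forall (i : nat) (l : L i) (h : hist X i), (i < n)%N -> is_distr (p i l h)).

Lemma q01 i l h u : (i < n)%N -> 0 <= p i l h u <= 1.
Proof.
move=> /(hp i l h) [q0 qs]; rewrite q0 /=.
rewrite -lee_fin -qs -(@esum_set1 _ _ u (fun u => (p i l h u)%:E)) ?lee_fin //.
by apply: esum_subset => // v; rewrite lee_fin.
Qed.

Lemma joint01 m (lam : forall j : 'I_m, L j) h : (m <= n)%N ->
  0 <= joint p lam h <= 1.
Proof.
move=> mn; rewrite /joint prodr_ge0 ?prodr_ile1 // => j _;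
  have /andP[] := q01 _ (lam j) (restr h j) (h j) (leq_trans (ltn_ord j) mn) => //.
by move=> -> ->.
Qed.

Lemma xcongr N (x : hist X N) k (p1 p2 : (k < N)%N) :
  x (Ordinal p1) = x (Ordinal p2).
Proof. by rewrite (bool_irrelevance p1 p2). Qed.

Definition lamr m (lam : forall j : 'I_m.+1, L j) : forall j : 'I_m, L j :=
  fun j => lam (widen_ord (leqnSn m) j).

Lemma joint_rec m (lam : forall j : 'I_m.+1, L j) (x : hist X m.+1) :
  joint p lam x = joint p (lamr m lam) (restr x ord_max) *
     p m (lam ord_max) (restr x ord_max) (x ord_max).
Proof.
rewrite /joint big_ord_recr /=; congr (_ * _); apply: eq_bigr => j _.
rewrite /lamr.
have -> : restr (restr x ord_max) j = restr x (widen_ord (leqnSn m) j).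
  by apply/ffunP => k; rewrite !ffunE; apply: xcongr.
by rewrite [in RHS]ffunE; congr (p _ _ _ _); apply: xcongr.
Qed.


Lemma entropyE (T : choiceType) (q : T -> R) :
  entropy q = (\esum_(u in [set: T]) (ent (q u))%:E)%E.
Proof. by []. Qed.

Lemma inner_eq m (mn : (m < n)%N) (a : R) (l : L m) (h : hist X m) :
  0 <= a <= 1 ->
  (\esum_(y in [set: X m]) (ent (a * p m l h y))%:E =
   (ent a)%:E + a%:E * entropy (p m l h))%E.
Proof.
case/andP=> a0 a1; have [q0 qs] := hp m l h mn.
have q1 y := q01 m l h y mn.
under eq_esum => y _ do rewrite entM // EFinD EFinM [X in (_ + X)%E]EFinM.
rewrite esumD; last 2 first.
- by move=> y _; rewrite mule_ge0 // lee_fin ?ent_ge0 ?a0 ?a1.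
- by move=> y _; rewrite mule_ge0 // lee_fin ?ent_ge0 ?a0 ?a1.
under eq_esum => y _ do rewrite muleC.
have ea : 0 <= ent a by rewrite ent_ge0 // a0 a1.
rewrite esumZ //; try by move=> y; rewrite lee_fin.
rewrite qs mule1 esumZ // => y; by rewrite lee_fin ent_ge0.
Qed.

Definition phi m (x : hist X m.+1) : (hist X m * X m)%type :=
  (restr x ord_max, x ord_max).

Lemma phi_inj m : injective (phi m).
Proof.
move=> x x' [e1 e2]; apply/ffunP => -[k pk].
have [hk|hk|hk] := ltngtP k m.
- have := congr1 (fun f : hist X m => f (Ordinal hk)) e1; rewrite /= !ffunE.
  by rewrite (xcongr _ x _ _ pk) (xcongr _ x' _ _ pk).
- by have := pk; rewrite ltnS leqNgt hk.
- subst k; move: e2; rewrite /ord_max.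
  by rewrite (xcongr _ x _ _ pk) (xcongr _ x' _ _ pk).
Qed.


Lemma main m : (m <= n)%N -> forall lam : forall j : 'I_m, L j,
  (entropy (joint p lam) <= \sum_(i < m) Hhat_cond p i)%E.
Proof.
elim: m => [|m IH] mn lam.
  rewrite big_ord0 entropyE esum1 // => x _.
  by rewrite /joint big_ord0 /ent oner_eq0 invr1 ln1 mulr0.
have mn' : (m < n)%N by [].
set J := joint p (lamr m lam).
set q := p m (lam ord_max).
pose G (z : (hist X m * X m)%type) := (ent (J z.1 * q z.1 z.2))%:E.
have G0 z : (0 <= G z)%E.
  rewrite lee_fin ent_ge0 //.
  have /andP[j0 j1] := joint01 m (lamr m lam) z.1 (ltnW mn).
  have /andP[q0 q1] := q01 m (lam ord_max) z.1 z.2 mn'.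
  by rewrite mulr_ge0 //= mulr_ile1.
have E1 : entropy (joint p lam) = (\esum_(x in [set: hist X m.+1]) G (phi m x))%E.
  by rewrite entropyE; apply: eq_esum => x _; rewrite joint_rec.
rewrite E1 -(esum_image _ (phi m) G); last by move=> x y _ _; apply: phi_inj.
have H := esum_subset _ (range (phi m)) setT G (fun _ _ => I) G0.
apply: le_trans H _.
have -> : [set: (hist X m * X m)%type] = [set: hist X m] `*`` (fun=> [set: X m]).
  by apply/seteqP; split.
rewrite (eq_esum (b := fun k => (fun h y => G (h, y)) k.1 k.2)); last by move=> -[].
rewrite -(esum_esum (a := fun h y => G (h, y))); last by move=> *; apply: G0.
rewrite /G /=.
under eq_esum => h _ do rewrite (inner_eq m mn' _ (lam ord_max) h (joint01 m (lamr m lam) h (ltnW mn))).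
rewrite esumD; last 2 first.
- by move=> h _; rewrite lee_fin ent_ge0 // joint01 // ltnW.
- move=> h _; rewrite mule_ge0 //; first by rewrite lee_fin; case/andP: (joint01 m (lamr m lam) h (ltnW mn)).
  by rewrite entropyE esum_ge0 // => y _; rewrite lee_fin ent_ge0 // q01.
rewrite big_ord_recr /=; apply: leeD.
  by rewrite -entropyE; apply: IH; rewrite ltnW.
apply: (@le_trans _ _ (\esum_(h in [set: hist X m])
   (J h)%:E * ereal_sup [set entropy (p m l h) | l in [set: L m]])%E).
  apply: le_esum => h _; apply: lee_wpmul2l.
    by rewrite lee_fin; case/andP: (joint01 m (lamr m lam) h (ltnW mn)).
  by apply: ereal_sup_ubound; exists (lam ord_max).
by apply: ereal_sup_ubound; exists (lamr m lam).
Qed.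

End S.

Theorem theorem6 (R : realType) (X : nat -> countType) (L : nat -> Type)
  (p : forall i : nat, L i -> hist X i -> X i -> R) (n : nat)
  (hL : forall i : nat, (i < n)%N -> inhabited (L i))
  (hp : forall (i : nat) (l : L i) (h : hist X i), (i < n)%N -> is_distr (p i l h)) :
  (Hhat_joint p n <= \sum_(i < n) Hhat_cond p i)%E.
Proof.
rewrite /Hhat_joint; apply: ge_ereal_sup => _ [lam _ <-].
exact: (main R X L p n hp n (leqnn n) lam).
Qed.
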